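(* Let $(T_1,T_2)$ be a commuting pair of strict contractions ($\|T_1\|<1$, $\|T_2\|<1$) on a complex Banach space $\mathbb X$ such that for $i=1,2$ the function $A_{T_i}(x)=(\|x\|^2-\|T_ix\|^2)^{1/2}$ defines a norm on $\mathbb X$, and let $\mathbb X_i=(\mathbb X,A_{T_i})$. Suppose there is a unitary $S:\mathbb X_1\oplus_2\mathbb X_2\to\mathbb X_1\oplus_2\mathbb X_2$ with $$S(T_2x,x)=(x,T_1x)\quad\text{for all }x\in\mathbb X.$$ Then $(T_1,T_2)$ admits a minimal isometric dilation on the Banach space $\widetilde{\mathbb X}=\mathbb X\oplus_2\ell_2(\mathbb X_1\oplus_2\mathbb X_2)$; i.e. there are commuting linear isometries $V_1,V_2$ on $\widetilde{\mathbb X}$ with $P_{\mathbb X}V_1^{s_1}V_2^{s_2}x=T_1^{s_1}T_2^{s_2}x$ for all $x\in\mathbb X$, $s_1,s_2\in\mathbb N\cup\{0\}$, and $\widetilde{\mathbb X}=\overline{\operatorname{span}}\{V_1^{s_1}V_2^{s_2}x:x\in\mathbb X,\ s_1,s_2\in\mathbb N\cup\{0\}\}$.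
   Context: $A_T(x)=(\|x\|^2-\|Tx\|^2)^{1/2}$ for a contraction $T$; ''$A_T$ defines a norm'' means it is a norm on $\mathbb X$, and $(\mathbb X,A_T)$ is $\mathbb X$ with this norm. $\oplus_2$ denotes the direct $2$-sum, with norm $\|(x_1,x_2)\|=(\|x_1\|^2+\|x_2\|^2)^{1/2}$; $\ell_2(\mathbb Y)$ is the space of square-summable sequences in $\mathbb Y$ with norm $(\sum\|y_n\|^2)^{1/2}$. $\mathbb X$ is identified with $\{(x,\mathbf 0,\mathbf 0,\dots)\}\subseteq\widetilde{\mathbb X}$ and $P_{\mathbb X}(x,(x_1,x_2),\dots)=x$. A unitary is a surjective linear isometry. *)

(* Defs.v *)
From HB Require Import structures.
From mathcomp Require Import all_boot all_order all_algebra.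
From mathcomp Require Import all_classical all_reals all_analysis.
From mathcomp Require Import complex.
Import Order.TTheory GRing.Theory Num.Theory.
Import numFieldNormedType.Exports.
Set Implicit Arguments.
Unset Strict Implicit.
Unset Printing Implicit Defensive.
Local Open Scope ring_scope.
Local Open Scope complex_scope.

(* real-valued norm ||x|| (the norm of a normedModType over R[i] takes values
   in R[i]; it is real, we take its real part) *)
Definition rnorm (R : realType) (V : normedModType R[i]) (x : V) : R :=
  complex.Re `|x|.

Definition opnorm (R : realType) (V : normedModType R[i]) (T : V -> V) : \bar R :=
  ereal_sup [set ((rnorm (T x))%:E)%E | x in [set x : V | rnorm x <= 1]].

Definition strict_contraction (R : realType) (V : normedModType R[i])
  (T : V -> V) : Prop := (opnorm T < 1%:E)%E.

Definition A_ (R : realType) (V : normedModType R[i]) (T : V -> V) (x : V) : R :=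
  Num.sqrt (rnorm x ^+ 2 - rnorm (T x) ^+ 2).

Definition is_norm (R : realType) (V : normedModType R[i]) (f : V -> R) : Prop :=
  [/\ (forall x, 0 <= f x),
      (forall x, f x = 0 -> x = 0),
      (forall (a : R[i]) x, f (a *: x) = complex.Re `|a| * f x) &
      (forall x y, f (x + y) <= f x + f y)].

(* norm of X_1 (+)_2 X_2, where X_i = (X, A_{T_i}) *)
Definition norm12 (R : realType) (V : normedModType R[i]) (T1 T2 : V -> V)
  (p : (V * V)%type) : R :=
  Num.sqrt (A_ T1 p.1 ^+ 2 + A_ T2 p.2 ^+ 2).

Definition unitary12 (R : realType) (V : normedModType R[i]) (T1 T2 : V -> V)
  (S : {linear (V * V)%type -> (V * V)%type}) : Prop :=
  (forall p, norm12 T1 T2 (S p) = norm12 T1 T2 p) /\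
  (forall q, exists p, S p = q).

(* Ambient carrier of Xtilde = X (+)_2 l_2(X_1 (+)_2 X_2):
   pairs (x, (y_n)_n) with y_n in X_1 (+)_2 X_2. *)
Definition Xamb (R : realType) (V : normedModType R[i]) : lmodType R[i] :=
  (V * (nat -> V * V))%type.

Definition l2sq (R : realType) (V : normedModType R[i]) (T1 T2 : V -> V)
  (u : nat -> (V * V)%type) : \bar R :=
  (\sum_(0 <= n <oo) ((norm12 T1 T2 (u n)) ^+ 2)%:E)%E.

Definition inXt (R : realType) (V : normedModType R[i]) (T1 T2 : V -> V)
  (z : Xamb V) : Prop := (l2sq T1 T2 z.2 < +oo)%E.

Definition normXt (R : realType) (V : normedModType R[i]) (T1 T2 : V -> V)
  (z : Xamb V) : R :=
  Num.sqrt (rnorm z.1 ^+ 2 + fine (l2sq T1 T2 z.2)).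

Definition embX (R : realType) (V : normedModType R[i]) (x : V) : Xamb V :=
  (x, fun _ => (0, 0)).

Definition PX (R : realType) (V : normedModType R[i]) (z : Xamb V) : V := z.1.

Definition minimal_isometric_dilation (R : realType) (V : normedModType R[i])
  (T1 T2 : V -> V) (V1 V2 : Xamb V -> Xamb V) : Prop :=
      (forall z, inXt T1 T2 z -> inXt T1 T2 (V1 z) /\ inXt T1 T2 (V2 z)) /\
      (forall (a : R[i]) z w, inXt T1 T2 z -> inXt T1 T2 w ->
         V1 (a *: z + w) = a *: V1 z + V1 w /\
         V2 (a *: z + w) = a *: V2 z + V2 w) /\
      (forall z, inXt T1 T2 z ->
         normXt T1 T2 (V1 z) = normXt T1 T2 z /\
         normXt T1 T2 (V2 z) = normXt T1 T2 z) /\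
      (forall z, inXt T1 T2 z -> V1 (V2 z) = V2 (V1 z)) /\
      (forall (x : V) (s1 s2 : nat),
         PX (iter s1 V1 (iter s2 V2 (embX x))) = iter s1 T1 (iter s2 T2 x)) /\
      (* minimality: closed span of {V1^s1 V2^s2 x} is all of Xtilde *)
      (forall z, inXt T1 T2 z -> forall eps : R, 0 < eps ->
         exists (n : nat) (c : 'I_n -> R[i]) (xs : 'I_n -> V) (s1 s2 : 'I_n -> nat),
           normXt T1 T2
             (z - \sum_(i < n) c i *: iter (s1 i) V1 (iter (s2 i) V2 (embX (xs i))))
           < eps).

(* Main.v *)
Require Import Defs.
From HB Require Import structures.
From mathcomp Require Import all_boot all_order all_algebra.
From mathcomp Require Import all_classical all_reals all_analysis.
From mathcomp Require Import complex.
Import Order.TTheory GRing.Theory Num.Theory.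
Import numFieldNormedType.Exports.
Local Open Scope ring_scope.
Local Open Scope complex_scope.

Section Basics.
Variables (R : realType) (X : normedModType R[i]).

Lemma rnormE (x : X) : `|x| = (rnorm x)%:C.
Proof.
have := normr_ge0 x; rewrite /rnorm.
move: (`|x|) => z; rewrite lecE /= => /andP[/eqP h _].
by apply/eqP; rewrite eq_complex /= -h !eqxx.
Qed.

Lemma rnorm_ge0 (x : X) : 0 <= rnorm x.
Proof. by have := normr_ge0 x; rewrite rnormE lecR. Qed.

Lemma rnorm0 : rnorm (0 : X) = 0.
Proof. by rewrite /rnorm normr0. Qed.

Lemma rnorm_eq0 (x : X) : rnorm x = 0 -> x = 0.
Proof. by move=> h; apply/normr0_eq0; rewrite rnormE h. Qed.

Lemma rnormZr (r : R) (x : X) : 0 <= r -> rnorm (r%:C *: x) = r * rnorm x.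
Proof.
move=> r0; rewrite /rnorm normrZ normc_def rnormE /= expr0n /= addr0 sqrtr_sqr.
by rewrite ger0_norm // !mul0r subr0.
Qed.

Lemma contr_le (T : {linear X -> X}) : strict_contraction T ->
  forall x, rnorm (T x) <= rnorm x.
Proof.
move=> hT x.
have [->|xn0] := eqVneq x 0; first by rewrite linear0 rnorm0.
have rp : 0 < rnorm x.
  rewrite lt_def rnorm_ge0 andbT; apply/eqP => /rnorm_eq0 h.
  by rewrite h eqxx in xn0.
pose y := ((rnorm x)^-1)%:C *: x.
have ry : rnorm y = 1 by rewrite rnormZr ?invr_ge0 ?ltW // mulVf // gt_eqF.
have hy : ((rnorm (T y))%:E <= opnorm T)%E.
  apply: ereal_sup_ubound; by exists y => //=; rewrite ry.
have h1 : (rnorm (T y) < 1).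
  by rewrite -lte_fin; apply: le_lt_trans hy hT.
apply: ltW; move: h1; rewrite /y linearZ rnormZr ?invr_ge0 ?ltW //.
by rewrite mulrC ltr_pdivrMr // mul1r.
Qed.

Lemma A_sq (T : {linear X -> X}) : strict_contraction T ->
  forall x, A_ T x ^+ 2 = rnorm x ^+ 2 - rnorm (T x) ^+ 2.
Proof.
move=> hT x; rewrite /A_ sqr_sqrtr // subr_ge0 lerXn2r ?nnegrE ?rnorm_ge0 //.
exact: contr_le.
Qed.

Lemma norm12_sq (T1 T2 : X -> X) p :
  norm12 T1 T2 p ^+ 2 = A_ T1 p.1 ^+ 2 + A_ T2 p.2 ^+ 2.
Proof. by rewrite /norm12 sqr_sqrtr // addr_ge0 // sqr_ge0. Qed.

End Basics.
Lemma shift_sum (R : realType) (A : R) (a b g : nat -> R) : 0 <= A ->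
  (forall n, 0 <= a n) -> (forall n, 0 <= b n) -> g 0%N = A + b 0%N ->
  (forall k, g k.+1 = a k + b k.+1) ->
  (\sum_(0 <= n <oo) (g n)%:E = A%:E + \sum_(0 <= n <oo) (a n + b n)%:E)%E.
Proof.
move=> A0 a0 b0 g0 gS.
pose h n := if n is k.+1 then (a k)%:E else A%:E.
have h0 n : (0 <= h n)%E by case: n => [|n]; rewrite /h lee_fin.
rewrite (@eq_eseriesr _ _ (fun n => h n + (b n)%:E)%E); last first.
  by case=> [|k] _; rewrite ?g0 ?gS EFinD.
rewrite nneseriesD //; last by move=> i _ _; rewrite lee_fin.
rewrite (@eq_eseriesr _ (fun n => (a n + b n)%:E) (fun n => (a n)%:E + (b n)%:E)%E);
  last by move=> i _; rewrite EFinD.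
rewrite [X in (_ = _ + X)%E]nneseriesD //; last 2 first.
  by move=> i _ _; rewrite lee_fin.
  by move=> i _ _; rewrite lee_fin.
rewrite addeA; congr (_ + _)%E.
rewrite nneseries_recl // -(nneseries_addn 1) //.
congr (_ + _)%E; apply: eq_eseriesr => i _; by rewrite addn1.
Qed.

Lemma pairD (A B : zmodType) (a b : A) (c d : B) :
  ((a, c) + (b, d) : (A * B)%type) = (a + b, c + d).
Proof. by []. Qed.
Lemma pairN (A B : zmodType) (a : A) (c : B) :
  (- (a, c) : (A * B)%type) = (- a, - c).
Proof. by []. Qed.

Section Main.
Variables (R : realType) (X : normedModType R[i]) (T1 T2 : {linear X -> X}).
Hypothesis (hT1 : strict_contraction T1) (hT2 : strict_contraction T2).
Hypothesis hcomm : forall x, T1 (T2 x) = T2 (T1 x).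
Hypothesis (hA1 : is_norm (A_ T1)) (hA2 : is_norm (A_ T2)).
Variable S : {linear (X * X)%type -> (X * X)%type}.
Hypothesis hS : unitary12 T1 T2 S.
Hypothesis hST : forall x : X, S (T2 x, x) = (x, T1 x).
Variable Sinv : (X * X)%type -> (X * X)%type.
Hypothesis SK : forall q, S (Sinv q) = q.

Local Notation n12 := (norm12 T1 T2).

Lemma A0 (T : {linear X -> X}) : A_ T 0 = 0.
Proof. by rewrite /A_ linear0 rnorm0 expr0n /= subrr sqrtr0. Qed.

Lemma n12_0 : n12 0 = 0.
Proof. by rewrite /norm12 /= A0 A0 expr0n /= addr0 sqrtr0. Qed.

Lemma n12_eq0 p : n12 p = 0 -> p = 0.
Proof.
move=> h; have : n12 p ^+ 2 = 0 by rewrite h expr0n.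
clear h.
rewrite norm12_sq => /eqP; rewrite paddr_eq0 ?sqr_ge0 // !sqrf_eq0.
case/andP=> /eqP h1 /eqP h2.
case: hA1 => _ e1 _ _; case: hA2 => _ e2 _ _.
by case: p h1 h2 => a b /= /e1 -> /e2 ->.
Qed.

Lemma S_inj p q : S p = S q -> p = q.
Proof.
move=> h; apply/eqP; rewrite -subr_eq0; apply/eqP/n12_eq0.
by rewrite -hS.1 linearB h subrr n12_0.
Qed.

Lemma SinvK p : Sinv (S p) = p.
Proof. by apply: S_inj; rewrite SK. Qed.

Lemma Sinv_lin (a : R[i]) p q : Sinv (a *: p + q) = a *: Sinv p + Sinv q.
Proof. by apply: S_inj; rewrite SK linearP !SK. Qed.

Lemma n12_S p : n12 (S p) = n12 p.
Proof. exact: hS.1. Qed.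

Lemma n12_Sinv q : n12 (Sinv q) = n12 q.
Proof. by rewrite -{2}(SK q) n12_S. Qed.

Definition V1f (z : Xamb X) : Xamb X :=
  (T1 z.1, fun n => match n with
    | 0 => (z.1, (S (z.2 0%N)).2)
    | k.+1 => ((S (z.2 k)).1, (S (z.2 k.+1)).2) end).

Definition V2f (z : Xamb X) : Xamb X :=
  (T2 z.1, fun n => match n with
    | 0 => Sinv ((z.2 0%N).1, z.1)
    | k.+1 => Sinv ((z.2 k.+1).1, (z.2 k).2) end).


Lemma l2sq_V1 z : l2sq T1 T2 (V1f z).2 = ((A_ T1 z.1) ^+ 2)%:E + l2sq T1 T2 z.2.
Proof.
rewrite /l2sq (@shift_sum _ ((A_ T1 z.1) ^+ 2)
  (fun n => (A_ T1 (S (z.2 n)).1) ^+ 2) (fun n => (A_ T2 (S (z.2 n)).2) ^+ 2)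
  (fun n => n12 ((V1f z).2 n) ^+ 2)) ?sqr_ge0 //;
  [| | | |].
all: try by move=> ?; apply: sqr_ge0.
2: by rewrite /= norm12_sq.
2: by move=> k; rewrite /= norm12_sq.
congr (_ + _)%E; apply: eq_eseriesr => n _.
by rewrite -norm12_sq n12_S.
Qed.

Lemma l2sq_V2 z : l2sq T1 T2 (V2f z).2 = ((A_ T2 z.1) ^+ 2)%:E + l2sq T1 T2 z.2.
Proof.
rewrite /l2sq (@shift_sum _ ((A_ T2 z.1) ^+ 2)
  (fun n => (A_ T2 (z.2 n).2) ^+ 2) (fun n => (A_ T1 (z.2 n).1) ^+ 2)
  (fun n => n12 ((V2f z).2 n) ^+ 2)) ?sqr_ge0 //;
  [| | | |].
all: try by move=> ?; apply: sqr_ge0.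
2: by rewrite /= n12_Sinv norm12_sq addrC.
2: by move=> k; rewrite /= n12_Sinv norm12_sq addrC.
congr (_ + _)%E; apply: eq_eseriesr => n _.
by rewrite norm12_sq addrC.
Qed.

Lemma l2sq_ge0 u : (0 <= l2sq T1 T2 u)%E.
Proof. by apply: nneseries_ge0 => n _ _; rewrite lee_fin sqr_ge0. Qed.

Lemma inXt_fin z : inXt T1 T2 z -> exists r, l2sq T1 T2 z.2 = r%:E.
Proof.
move=> h; exists (fine (l2sq T1 T2 z.2)); rewrite fineK //.
by rewrite ge0_fin_numE // l2sq_ge0.
Qed.

Lemma iso_gen (T : {linear X -> X}) (hT : strict_contraction T) z w :
  inXt T1 T2 z -> w.1 = T z.1 ->
  l2sq T1 T2 w.2 = ((A_ T z.1) ^+ 2)%:E + l2sq T1 T2 z.2 ->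
  inXt T1 T2 w /\ normXt T1 T2 w = normXt T1 T2 z.
Proof.
move=> /inXt_fin [r hr] h1 h2; rewrite /inXt /normXt h2 hr h1 -EFinD /=.
split; first exact: ltry.
by rewrite A_sq // addrA [X in X + _]addrC subrK.
Qed.

Lemma V1_iso z : inXt T1 T2 z -> inXt T1 T2 (V1f z) /\ normXt T1 T2 (V1f z) = normXt T1 T2 z.
Proof. by move=> h; apply: (@iso_gen T1 hT1 z (V1f z) h) => //; rewrite l2sq_V1. Qed.

Lemma V2_iso z : inXt T1 T2 z -> inXt T1 T2 (V2f z) /\ normXt T1 T2 (V2f z) = normXt T1 T2 z.
Proof. by move=> h; apply: (@iso_gen T2 hT2 z (V2f z) h) => //; rewrite l2sq_V2. Qed.

Definition VV (z : Xamb X) : Xamb X :=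
  (T1 (T2 z.1), fun n => match n with 0 => (T2 z.1, z.1) | k.+1 => z.2 k end).

Lemma V12E z : V1f (V2f z) = VV z.
Proof.
rewrite /V1f /V2f /VV /=; congr pair; apply: funext => -[|k] /=.
  by rewrite SK.
case: k => [|j] /=; rewrite !SK /=; by case: (z.2 _).
Qed.

Lemma V21E z : V2f (V1f z) = VV z.
Proof.
rewrite /V1f /V2f /VV /=; congr pair; first by rewrite hcomm.
apply: funext => -[|k] /=.
  by rewrite -hST SinvK.
by case: k => [|j] /=; rewrite -surjective_pairing SinvK.
Qed.

Lemma Vcomm z : V1f (V2f z) = V2f (V1f z).
Proof. by rewrite V12E V21E. Qed.

Lemma V1_lin (a : R[i]) z w : V1f (a *: z + w) = a *: V1f z + V1f w.
Proof.
rewrite /V1f /=; congr pair; first by rewrite linearP.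
apply: funext => -[|k] /=; rewrite !fctE /= ?linearP //.

Qed.

Lemma V2_lin (a : R[i]) z w : V2f (a *: z + w) = a *: V2f z + V2f w.
Proof.
rewrite /V2f /=; congr pair; first by rewrite linearP.
by apply: funext => -[|k] /=; rewrite !fctE /= -Sinv_lin.
Qed.


Lemma V1_add z w : V1f (z + w) = V1f z + V1f w.
Proof. by have := V1_lin 1 z w; rewrite !scale1r. Qed.
Lemma V2_add z w : V2f (z + w) = V2f z + V2f w.
Proof. by have := V2_lin 1 z w; rewrite !scale1r. Qed.
Lemma V1_0 : V1f 0 = 0.
Proof. by have := V1_lin (-1) 0 0; rewrite !scaleN1r oppr0 addr0 addNr. Qed.
Lemma V2_0 : V2f 0 = 0.
Proof. by have := V2_lin (-1) 0 0; rewrite !scaleN1r oppr0 addr0 addNr. Qed.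
Lemma V1_Z a z : V1f (a *: z) = a *: V1f z.
Proof. by have := V1_lin a z 0; rewrite !addr0 V1_0 addr0. Qed.
Lemma V2_Z a z : V2f (a *: z) = a *: V2f z.
Proof. by have := V2_lin a z 0; rewrite !addr0 V2_0 addr0. Qed.

Lemma dil s1 s2 z : (iter s1 V1f (iter s2 V2f z)).1 = iter s1 T1 (iter s2 T2 z.1).
Proof.
elim: s1 => [|s1 IH] /=; last by rewrite IH.
by elim: s2 => [|s2 IH] //=; rewrite IH.
Qed.

Lemma V2_iter1 s z : V2f (iter s V1f z) = iter s V1f (V2f z).
Proof. by elim: s => [|s IH] //=; rewrite -Vcomm IH. Qed.

Definition term (t : R[i] * X * nat * nat) : Xamb X :=
  t.1.1.1 *: iter t.1.2 V1f (iter t.2 V2f (embX t.1.1.2)).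

Definition inspan (w : Xamb X) := exists l, w = \sum_(t <- l) term t.

Lemma inspan_add w1 w2 : inspan w1 -> inspan w2 -> inspan (w1 + w2).
Proof. by move=> [l1 ->] [l2 ->]; exists (l1 ++ l2); rewrite big_cat. Qed.

Lemma inspan_term t : inspan (term t).
Proof. by exists [:: t]; rewrite big_seq1. Qed.

Lemma inspan_VV w : inspan w -> inspan (VV w).
Proof.
move=> [l ->]; rewrite -V12E.
exists (map (fun t => (t.1.1, t.1.2.+1, t.2.+1)) l); rewrite big_map.
elim: l => [|t l IH]; first by rewrite !big_nil V2_0 V1_0.
rewrite !big_cons V2_add V1_add IH; congr (_ + _).
by rewrite /term V2_Z V1_Z V2_iter1.
Qed.

Definition dl (k : nat) (e : (X * X)%type) : nat -> (X * X)%type :=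
  fun n => if n == k then e else 0.

Lemma inspan_dl0 e : inspan ((0, dl 0 e) : Xamb X).
Proof.
case: e => a b.
have -> : ((0, dl 0 (a, b)) : Xamb X) =
  term (1, a, 1%N, 0%N) + term (-1, T1 a, 0%N, 0%N) + term (1, b, 1%N, 1%N)
  + term (-1, T2 b, 1%N, 0%N).
  rewrite /term /= !scale1r !scaleN1r V12E.
  rewrite /V1f /VV /embX /= linear0 !pairN !pairD.
  congr pair; first by rewrite /= subrr add0r subrr.
  apply: funext => -[|n]; rewrite /= !fctE /dl /=.
    by rewrite !pairN !pairD; congr pair; rewrite ?subr0 ?addrK // ?add0r.
  by rewrite !subrr add0r subrr.
by apply: inspan_add; [apply: inspan_add; [apply: inspan_add|]|];
  apply: inspan_term.
Qed.

Lemma inspan_dl k e : inspan ((0, dl k e) : Xamb X).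
Proof.
elim: k => [|k IH]; first exact: inspan_dl0.
have -> : ((0, dl k.+1 e) : Xamb X) = VV (0, dl k e); last exact: inspan_VV.
rewrite /VV /= !linear0; congr pair.
by apply: funext => -[|n].
Qed.

Definition tr (N : nat) (u : nat -> (X * X)%type) : nat -> (X * X)%type :=
  fun n => if (n < N)%N then u n else 0.

Lemma inspan_tr (z : Xamb X) N : inspan ((z.1, tr N z.2) : Xamb X).
Proof.
elim: N => [|N IH].
  have -> : ((z.1, tr 0 z.2) : Xamb X) = term (1, z.1, 0%N, 0%N) by rewrite /term scale1r.
  exact: inspan_term.
have -> : ((z.1, tr N.+1 z.2) : Xamb X) = (z.1, tr N z.2) + (0, dl N (z.2 N)).
  rewrite pairD addr0; congr pair; apply: funext => n; rewrite fctE /tr /dl ltnS.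
  case: ltngtP => hn; rewrite ?addr0 ?add0r //.
  by rewrite hn.
exact: inspan_add IH (inspan_dl _ _).
Qed.

Lemma tail_l2sq (u : nat -> (X * X)%type) N :
  l2sq T1 T2 (fun n => if (n < N)%N then 0 else u n) =
  (\sum_(N <= k <oo) (n12 (u k) ^+ 2)%:E)%E.
Proof.
rewrite /l2sq (nneseries_split 0 N); last by move=> k _; rewrite lee_fin sqr_ge0.
rewrite add0n big_nat big1 ?add0e; last first.
  by move=> k /andP[_ kN]; rewrite kN n12_0 expr0n.
rewrite -(@nneseries_addn _ _ N); last by move=> i; rewrite lee_fin sqr_ge0.
rewrite -(@nneseries_addn _ _ N); last by move=> i; rewrite lee_fin sqr_ge0.
by apply: eq_eseriesr => i _; rewrite ltnNge leq_addl.
Qed.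

Lemma sub_tr (z : Xamb X) N :
  z - ((z.1, tr N z.2) : Xamb X) = (0, fun n => if (n < N)%N then 0 else z.2 n).
Proof.
case: z => x u; rewrite pairN pairD subrr; congr pair.
apply: funext => n; rewrite !fctE /tr /=.
by case: ifP => _; rewrite ?subrr ?subr0.
Qed.

Lemma main_dil : minimal_isometric_dilation T1 T2 V1f V2f.
Proof.
split; [|split; [|split; [|split; [|split]]]].
- by move=> z h; split; [exact: (proj1 (V1_iso z h)) | exact: (proj1 (V2_iso z h))].
- by move=> a z w _ _; split; [exact: V1_lin|exact: V2_lin].
- by move=> z h; split; [exact: (proj2 (V1_iso z h))|exact: (proj2 (V2_iso z h))].
- by move=> z _; exact: Vcomm.
- by move=> x s1 s2; rewrite /PX dil.
move=> z hz eps he.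
have := @nneseries_tail_cvg R (fun n => (n12 (z.2 n) ^+ 2)%:E) xpredT hz.
move=> /(_ (fun k _ => sqr_ge0 _)).
case/fine_cvgP => hfin /cvgrPdist_lt /(_ (eps ^+ 2) (exprn_gt0 2 he)) [N0 _ HN].
have := HN N0 (leqnn N0); rewrite /= sub0r normrN => hlt.
have [l hl] := inspan_tr z N0.
pose t0 : (R[i] * X * nat * nat)%type := (0, 0, 0%N, 0%N).
exists (size l), (fun i => (nth t0 l i).1.1.1), (fun i => (nth t0 l i).1.1.2),
  (fun i => (nth t0 l i).1.2), (fun i => (nth t0 l i).2).
have -> : \sum_(i < size l) (nth t0 l i).1.1.1 *: iter (nth t0 l i).1.2 V1f
    (iter (nth t0 l i).2 V2f (embX (nth t0 l i).1.1.2)) = \sum_(t <- l) term t.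
  by rewrite (big_nth t0) big_mkord.
rewrite -hl sub_tr /normXt /= rnorm0 expr0n add0r tail_l2sq.
rewrite -(gtr0_norm he) -sqrtr_sqr ltr_sqrt ?exprn_gt0 ?normr_gt0 ?gt_eqF //.
apply: le_lt_trans hlt; exact: ler_norm.
Qed.
End Main.


Theorem theorem2p3 (R : realType) (X : completeNormedModType R[i])
  (T1 T2 : {linear X -> X})
  (hT1 : strict_contraction T1) (hT2 : strict_contraction T2)
  (hcomm : forall x, T1 (T2 x) = T2 (T1 x))
  (hA1 : is_norm (A_ T1)) (hA2 : is_norm (A_ T2))
  (S : {linear (X * X)%type -> (X * X)%type})
  (hS : unitary12 T1 T2 S)
  (hST : forall x : X, S (T2 x, x) = (x, T1 x)) :
  exists V1 V2 : Xamb X -> Xamb X, minimal_isometric_dilation T1 T2 V1 V2.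
Proof.
have [Sinv SK] := boolp.choice hS.2.
exists (V1f R X T1 S), (V2f R X T2 Sinv).
exact: (@main_dil R X T1 T2 hT1 hT2 hcomm hA1 hA2 S hS hST Sinv SK).
Qed.
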